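(* Let $\mathcal{G}\subset\mathcal{S}$ with harmonic analogue $\mathcal{G}_H^0$, and let $\mathcal{O}\subset\mathcal{A}$ be such that $\varphi*F\in\mathcal{G}$ for all $F\in\mathcal{G}$ and $\varphi\in\mathcal{O}$. Then $\varphi\,\tilde{*}\,f\in\mathcal{G}_H^0$ for all $\varphi\in\mathcal{O}$ and $f\in\mathcal{G}_H^0$.
   Context: $\mathbb{D}$ is the open unit disk. $\mathcal{A}$ is the class of analytic $f$ in $\mathbb{D}$ with $f(0)=0$, $f'(0)=1$, and $\mathcal{S}\subset\mathcal{A}$ the univalent ones. For $\mathcal{G}\subset\mathcal{S}$, its harmonic analogue $\mathcal{G}_H^0$ is the class of harmonic functions $f=h+\bar g$ ($h,g$ analytic in $\mathbb{D}$) such that $h+\epsilon g\in\mathcal{G}$ for every $|\epsilon|=1$. For analytic $f(z)=\sum a_nz^n$, $F(z)=\sum A_nz^n$, $(f*F)(z)=\sum a_nA_nz^n$. For harmonic $f=h+\bar g$ and analytic $\varphi$, $f\,\tilde{*}\,\varphi=\varphi\,\tilde{*}\,f=h*\varphi+\overline{g*\varphi}$. *)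

(* Defs.v *)
From Stdlib Require Import Reals.
From Coquelicot Require Import Coquelicot.
Open Scope R_scope.

(* An analytic function on the unit disk D is represented by its Taylor
   coefficient sequence a : nat -> C, f(z) = sum_n a n z^n. *)
Definition coefs := nat -> C.

Definition cpow (z : C) (n : nat) : C := pow_n (K := C_Ring) z n.

Definition analytic_disk (a : coefs) : Prop :=
  forall z : C, Cmod z < 1 -> ex_series (fun n => Cmult (a n) (cpow z n)).

Definition has_value (a : coefs) (z v : C) : Prop :=
  is_series (fun n => Cmult (a n) (cpow z n)) v.

Definition classA (a : coefs) : Prop :=
  analytic_disk a /\ a 0%nat = RtoC 0 /\ a 1%nat = RtoC 1.

Definition univalent (a : coefs) : Prop :=
  forall z w v : C, Cmod z < 1 -> Cmod w < 1 ->
    has_value a z v -> has_value a w v -> z = w.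

Definition classS (a : coefs) : Prop := classA a /\ univalent a.

Definition hadamard (a b : coefs) : coefs := fun n => Cmult (a n) (b n).

Definition add_scal (h : coefs) (eps : C) (g : coefs) : coefs :=
  fun n => Cplus (h n) (Cmult eps (g n)).

(* A harmonic function f = h + conj g is represented by the pair (h, g). *)
Definition harm := (coefs * coefs)%type.

Definition harmonic_analogue (G : coefs -> Prop) (f : harm) : Prop :=
  analytic_disk (fst f) /\ analytic_disk (snd f) /\
  forall eps : C, Cmod eps = 1 -> G (add_scal (fst f) eps (snd f)).

Definition harm_conv (phi : coefs) (f : harm) : harm :=
  (hadamard (fst f) phi, hadamard (snd f) phi).

(* Main.v *)
Require Import Defs.
From Stdlib Require Import Reals.
From Coquelicot Require Import Coquelicot.
From Stdlib Require Import FunctionalExtensionality.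

Lemma Cmod_m1 : Cmod (Copp (RtoC 1)) = 1%R.
Proof. rewrite Cmod_opp. apply Cmod_1. Qed.

Lemma ex_series_comb (u v : nat -> C) (a b : C) :
  ex_series u -> ex_series v -> ex_series (fun n => Cplus (Cmult a (u n)) (Cmult b (v n))).
Proof.
  intros Hu Hv.
  apply (ex_series_plus (K:=C_AbsRing) (V:=C_NormedModule)).
  - apply (ex_series_scal (K:=C_AbsRing) (V:=C_NormedModule) a u Hu).
  - apply (ex_series_scal (K:=C_AbsRing) (V:=C_NormedModule) b v Hv).
Qed.

Theorem theorem2p11 (G O : coefs -> Prop)
  (HGS : forall F, G F -> classS F)
  (HOA : forall phi, O phi -> classA phi)
  (HO : forall phi F, O phi -> G F -> G (hadamard phi F)) :
  forall (phi : coefs) (f : harm),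
    O phi -> harmonic_analogue G f -> harmonic_analogue G (harm_conv phi f).
Proof.
  intros phi [h g] Hphi [Hh [Hg HG]]. simpl in *.
  assert (Hu := HGS _ (HO _ _ Hphi (HG (RtoC 1) Cmod_1))).
  assert (Hv := HGS _ (HO _ _ Hphi (HG (Copp (RtoC 1)) Cmod_m1))).
  destruct Hu as [[Hu _] _]. destruct Hv as [[Hv _] _].
  unfold harm_conv; simpl. split; [|split].
  - intros z Hz.
    eapply ex_series_ext; [|apply (ex_series_comb _ _ (RtoC (/2)) (RtoC (/2)) (Hu z Hz) (Hv z Hz))].
    intro n. unfold hadamard, add_scal. apply injective_projections; simpl; field.
  - intros z Hz.
    eapply ex_series_ext; [|apply (ex_series_comb _ _ (RtoC (/2)) (RtoC (-/2)) (Hu z Hz) (Hv z Hz))].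
    intro n. unfold hadamard, add_scal. apply injective_projections; simpl; field.
  - intros eps Heps.
    assert (E : add_scal (hadamard h phi) eps (hadamard g phi) = hadamard phi (add_scal h eps g)).
    { unfold add_scal, hadamard. apply functional_extensionality; intro n.
      apply injective_projections; simpl; ring. }
    simpl. rewrite E. apply HO; auto.
Qed.
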